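(* Let $\mathbb{Z}[t]$ be the polynomial ring in one variable over $\mathbb{Z}$. For all integers $j,r\ge1$ and all primes $p$, the cohomology group $H^j(\Gamma(SL_2(\mathbb{Z}[t]),p^r);\mathbb{F}_p)$ is not finitely generated (as an $\mathbb{F}_p$-vector space).
   Context: $\Gamma(SL_2(\mathbb{Z}[t]),p^r)=\ker\big(SL_2(\mathbb{Z}[t])\to SL_2(\mathbb{Z}[t]\otimes_{\mathbb{Z}}\mathbb{Z}/p^r)\big)$; cohomology is group cohomology with trivial coefficients $\mathbb{F}_p$. *)

(* Defs.v *)
(* Group cohomology of the congruence subgroup
   Gamma(SL_2(Z[t]), p^r) with trivial coefficients F_p, via the standard
   inhomogeneous (bar) cochain complex. *)
From HB Require Import structures.
From mathcomp Require Import all_boot all_order all_algebra.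
Set Implicit Arguments. Unset Strict Implicit. Unset Printing Implicit Defensive.
Import Order.TTheory GRing.Theory Num.Theory.
Local Open Scope ring_scope.

Notation Mat := 'M[{poly int}]_2.

(* M is in the kernel of SL_2(Z[t]) -> SL_2(Z[t] (x) Z/p^r) = SL_2((Z/p^r)[t]):
   det M = 1 and M = 1 + p^r N with N a matrix over Z[t]. *)
Definition inGamma (p r : nat) (M : Mat) : Prop :=
  \det M = 1 /\ exists N : Mat, M = 1 + ((p ^ r)%N%:R : {poly int}) *: N.

(* n-cochains: functions Gamma^n -> F_p (given as functions on n-tuples of
   matrices, only their values on tuples of elements of Gamma matter). *)
Definition cochain (p n : nat) := ('I_n -> Mat) -> 'F_p.

Definition tupleIn (p r n : nat) (g : 'I_n -> Mat) : Prop :=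
  forall k, inGamma p r (g k).

Definition face_first n (g : 'I_n.+1 -> Mat) : 'I_n -> Mat :=
  fun k => g (lift ord0 k).
Definition face_last n (g : 'I_n.+1 -> Mat) : 'I_n -> Mat :=
  fun k => g (widen_ord (leqnSn n) k).
Definition face_mul n (i : 'I_n) (g : 'I_n.+1 -> Mat) : 'I_n -> Mat :=
  fun k => if (k < i)%N then g (widen_ord (leqnSn n) k)
           else if (k == i :> nat) then g (widen_ord (leqnSn n) k) *m g (lift ord0 k)
           else g (lift ord0 k).

Definition delta (p n : nat) (f : cochain p n) : cochain p n.+1 :=
  fun g => f (face_first g)
           + \sum_(i < n) (-1) ^+ i.+1 * f (face_mul i g)
           + (-1) ^+ n.+1 * f (face_last g).

Definition is_cocycle (p r n : nat) (f : cochain p n) : Prop :=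
  forall g : 'I_n.+1 -> Mat, tupleIn p r g -> delta f g = 0.

Definition is_coboundary (p r n : nat) : cochain p n -> Prop :=
  match n return cochain p n -> Prop with
  | 0 => fun f => forall g, tupleIn p r g -> f g = 0
  | m.+1 => fun f => exists b : cochain p m,
              forall g, tupleIn p r g -> f g = delta b g
  end.

(* H^n(Gamma; F_p) is finitely generated: finitely many cocycles whose
   classes span H^n = Z^n / B^n. *)
Definition cohom_fin_gen (p r n : nat) : Prop :=
  exists (m : nat) (c : 'I_m -> cochain p n),
    (forall i, is_cocycle r (c i)) /\
    forall z : cochain p n, is_cocycle r z ->
      exists a : 'I_m -> 'F_p,
        is_coboundary r (fun g => z g - \sum_(i < m) a i * c i g).

(* Main.v *)
Require Import Defs.
From mathcomp Require Import all_boot all_order all_algebra.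
From mathcomp Require Import zify ring lra.
From Stdlib Require Import FunctionalExtensionality IndefiniteDescription.
Set Implicit Arguments. Unset Strict Implicit. Unset Printing Implicit Defensive.
Import Order.TTheory GRing.Theory Num.Theory.
Local Open Scope ring_scope.

Section Comb.
Variable p : nat.
Local Notation F := ('F_p).

Definition Fn n (f : cochain p n) (h : nat -> Mat) : F := f (fun k => h (val k)).

Definition gat n (g : 'I_n -> Mat) (m : nat) : Mat :=
  odflt 1 (omap g (insub m : option 'I_n)).

Lemma gat_lt n (h : nat -> Mat) m : (m < n)%N -> gat (fun k : 'I_n => h (val k)) m = h m.
Proof. by move=> lt; rewrite /gat insubT. Qed.

Lemma gatE n (g : 'I_n -> Mat) (k : 'I_n) : gat g k = g k.
Proof. by rewrite /gat valK. Qed.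

Lemma Fn_gat n (f : cochain p n) g : Fn f (gat g) = f g.
Proof. rewrite /Fn; congr f; apply: functional_extensionality => k; exact: gatE. Qed.

Lemma Fn_ext n (f : cochain p n) h h' :
  (forall k, (k < n)%N -> h k = h' k) -> Fn f h = Fn f h'.
Proof. move=> H; rewrite /Fn; congr f. apply: functional_extensionality => k. apply: H; exact: ltn_ord. Qed.

Definition dfirst (h : nat -> Mat) : nat -> Mat := fun k => h k.+1.
Definition dmul (i : nat) (h : nat -> Mat) : nat -> Mat :=
  fun k => if (k < i)%N then h k else if k == i then h k *m h k.+1 else h k.+1.
Definition D (N m : nat) (h : nat -> Mat) : nat -> Mat :=
  if m == 0%N then dfirst h else if m == N then h else dmul m.-1 h.
Definition ins (i : nat) (x : Mat) (h : nat -> Mat) : nat -> Mat :=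
  fun k => if (k < i)%N then h k else if k == i then x else h k.-1.

Definition sg (k : nat) : F := (-1) ^+ k.

Lemma delta_nat n (b : cochain p n) h :
  Fn (delta b) h = \sum_(0 <= m < n.+2) sg m * Fn b (D n.+1 m h).
Proof.
rewrite /Fn /delta big_nat_recl // big_nat_recr //=.
rewrite /sg expr0 mul1r.
rewrite [in RHS]big_mkord -!addrA; congr (_ + _).
congr (_ + _).
  apply: eq_bigr => i _; congr (_ * b _); apply: functional_extensionality => k.
  rewrite /face_mul /D /dmul /=.
  rewrite eqSS (ltn_eqF (ltn_ord i)) /bump /=.
  by [].
congr (_ * b _); apply: functional_extensionality => k.
by rewrite /D eqxx /=.
Qed.

Ltac crush :=
  repeat (simpl; case: ifP => ?); simpl; try (exfalso; lia); try reflexivity;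
  try (f_equal; lia); try (congr (_ *m _); f_equal; lia).

Definition S n (x : Mat) (f : cochain p n.+1) : cochain p n :=
  fun g => \sum_(0 <= i < n.+1) sg i * Fn f (ins i x (gat g)).

Lemma S_nat n x (f : cochain p n.+1) h :
  Fn (S x f) h = \sum_(0 <= i < n.+1) sg i * Fn f (ins i x h).
Proof.
rewrite /S /Fn; apply: eq_big_nat => i /andP[_ lti]; congr (_ * _).
apply: Fn_ext => k ltk; rewrite /ins.
case: ifP => ?; first by rewrite gat_lt //; lia.
case: ifP => ? //; rewrite gat_lt //; lia.
Qed.

Lemma fA N (b : cochain p N) x h m i : (0 < N)%N -> (m < i)%N -> (i <= N)%N ->
  Fn b (D N.+1 m (ins i x h)) = Fn b (ins i.-1 x (D N m h)).
Proof.
move=> N0 mi iN; apply: Fn_ext => k lk; rewrite /D /ins /dmul /dfirst; crush.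
Qed.

Lemma fB N (b : cochain p N) x h m i : (i < m)%N -> (m <= N)%N ->
  Fn b (D N.+1 m.+1 (ins i x h)) = Fn b (ins i x (D N m h)).
Proof.
move=> mi iN; apply: Fn_ext => k lk; rewrite /D /ins /dmul /dfirst; crush.
Qed.

Lemma fC N (b : cochain p N) x h i : (forall k, x *m h k = h k *m x) -> (i <= N)%N ->
  Fn b (D N.+1 i.+1 (ins i x h)) = Fn b (D N.+1 i.+1 (ins i.+1 x h)).
Proof.
move=> com iN; apply: Fn_ext => k lk; rewrite /D /ins /dmul /dfirst; crush.
exact: com.
Qed.

Lemma fc0 N (b : cochain p N) x h : Fn b (D N.+1 0 (ins 0 x h)) = Fn b h.
Proof. apply: Fn_ext => k lk; rewrite /D /ins /dmul /dfirst; crush. Qed.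

Lemma fcN N (b : cochain p N) x h : Fn b (D N.+1 N.+1 (ins N.+1 x h)) = Fn b h.
Proof. apply: Fn_ext => k lk; rewrite /D /ins /dmul /dfirst; crush. Qed.

Lemma sgS k : sg k.+1 = - sg k.
Proof. by rewrite /sg exprS mulN1r. Qed.

Lemma sg2 k : sg k * sg k = 1.
Proof. elim: k => [|k IH]; first by rewrite /sg expr0 mulr1. by rewrite sgS mulrNN. Qed.

Lemma split3 (G : nat -> F) i M : (i.+2 <= M)%N ->
  \sum_(0 <= m < M) G m = \sum_(0 <= m < i) G m + (G i + G i.+1) + \sum_(i.+2 <= m < M) G m.
Proof.
move=> iM.
have E2: G i + G i.+1 = \sum_(i <= m < i.+2) G m.
  by rewrite big_ltn // big_ltn // big_geq // addr0.
rewrite E2 -big_cat_nat //; last by lia.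
by rewrite -big_cat_nat //; lia.
Qed.

Section L3.
Variables (n : nat) (x : Mat) (b : cochain p n.+1) (h : nat -> Mat).
Hypothesis com : forall k, x *m h k = h k *m x.
Let N := n.+1.
Let a i m := sg i * sg m * Fn b (ins i x (D N m h)).
Let c i := Fn b (D N.+1 i (ins i x h)).

Lemma inner_eq i : (i <= N)%N ->
  sg i * (\sum_(0 <= m < N.+2) sg m * Fn b (D N.+1 m (ins i x h)))
  = (c i - c i.+1) - \sum_(0 <= m < i) a i.-1 m - \sum_(i.+1 <= m < N.+1) a i m.
Proof.
move=> iN.
rewrite mulr_sumr (split3 _ (i:=i)); last by lia.
have P1 : \sum_(0 <= m < i) sg i * (sg m * Fn b (D N.+1 m (ins i x h)))
          = - \sum_(0 <= m < i) a i.-1 m.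
  rewrite -sumrN; apply: eq_big_nat => m /andP[_ mi].
  have i0 : (0 < i)%N by lia.
  rewrite (@fA N b x h m i) //.
  have -> : sg i = - sg i.-1 by rewrite -sgS (prednK i0).
  rewrite /a; ring.
have P3 : \sum_(i.+2 <= m < N.+2) sg i * (sg m * Fn b (D N.+1 m (ins i x h)))
          = - \sum_(i.+1 <= m < N.+1) a i m.
  rewrite big_add1 /= -sumrN; apply: eq_big_nat => m /andP[im mN].
  rewrite (@fB N b x h m i) //.
  rewrite /a sgS; ring.
have P2 : sg i * (sg i * Fn b (D N.+1 i (ins i x h))) +
   sg i * (sg i.+1 * Fn b (D N.+1 i.+1 (ins i x h))) = c i - c i.+1.
  rewrite (@fC N b x h i) // sgS !mulrA sg2 mulrN sg2 mul1r mulNr mul1r.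
  by [].
rewrite P1 P2 P3; rewrite /c; ring.
Qed.

Lemma L3 : Fn (S x (delta b)) h = - Fn (delta (S x b)) h.
Proof.
rewrite S_nat.
transitivity (\sum_(0 <= i < N.+1)
   ((c i - c i.+1) - \sum_(0 <= m < i) a i.-1 m - \sum_(i.+1 <= m < N.+1) a i m)).
  apply: eq_big_nat => i /andP[_ iN]; rewrite delta_nat; apply: inner_eq; lia.
have T : \sum_(0 <= i < N.+1) (c i - c i.+1) = 0.
  have -> : \sum_(0 <= i < N.+1) (c i - c i.+1) = - \sum_(0 <= i < N.+1) (c i.+1 - c i).
    by rewrite -sumrN; apply: eq_bigr => i _; rewrite opprB.
  rewrite telescope_sumr; last by [].
  have e0 : c 0 = Fn b h by exact: fc0.
  have eN : c N.+1 = Fn b h by exact: fcN.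
  by rewrite e0 eN subrr oppr0.
rewrite sumrB sumrB T sub0r big_nat_recl // [X in - (X + _)]big_geq // add0r.
rewrite [X in _ - X]big_nat_recr //= [X in _ - (_ + X)]big_geq // addr0.
rewrite -opprD -big_split /=.
rewrite delta_nat; congr (- _).
have -> : \sum_(0 <= m < N.+1) sg m * Fn (S x b) (D n.+1 m h)
   = \sum_(0 <= m < N.+1) \sum_(0 <= i < N) a i m.
  apply: eq_bigr => m _; rewrite S_nat mulr_sumr; apply: eq_bigr => i _.
  by rewrite /a; ring.
rewrite exchange_big_nat /=; apply: eq_big_nat => i /andP[_ iN].
rewrite -big_cat_nat //; lia.
Qed.

End L3.

Fixpoint E (n : nat) (xs : nat -> Mat) : cochain p n -> F :=
  match n return cochain p n -> F with
  | 0 => fun f => f (fun _ => 1)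
  | n'.+1 => fun f => @E n' xs (S (xs n') f)
  end.

Lemma S_lin n x u (z : cochain p n.+1) m (a : 'I_m -> F) (c : 'I_m -> cochain p n.+1) :
  S x (fun g => u * z g + \sum_(i < m) a i * c i g)
  = fun g => u * S x z g + \sum_(i < m) a i * S x (c i) g.
Proof.
apply: functional_extensionality => g; rewrite /S /Fn.
under eq_bigr => k _ do rewrite mulrDr mulr_sumr.
rewrite big_split /=; congr (_ + _).
  by rewrite mulr_sumr; apply: eq_bigr => k _; rewrite mulrCA.
rewrite exchange_big /=; apply: eq_bigr => i _; rewrite mulr_sumr.
by apply: eq_bigr => k _; rewrite mulrCA.
Qed.

Lemma E_lin n xs u (z : cochain p n) m (a : 'I_m -> F) (c : 'I_m -> cochain p n) :
  E xs (fun g => u * z g + \sum_(i < m) a i * c i g)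
  = u * E xs z + \sum_(i < m) a i * E xs (c i).
Proof.
elim: n z c => [|n IH] z c; first by [].
by rewrite /= S_lin IH.
Qed.

Lemma E_scale n xs u (z : cochain p n) : E xs (fun g => u * z g) = u * E xs z.
Proof.
have := E_lin xs u z (fun i : 'I_0 => 0) (fun i : 'I_0 => z).
rewrite big_ord0 addr0 => <-; congr E.
by apply: functional_extensionality => g; rewrite big_ord0 addr0.
Qed.

Lemma delta_neg n (c : cochain p n) h :
  Fn (delta (fun g => - c g)) h = - Fn (delta c) h.
Proof.
rewrite !delta_nat -sumrN; apply: eq_bigr => m _; by rewrite /Fn mulrN.
Qed.

Lemma Fn0 (f : cochain p 0) h h' : Fn f h = Fn f h'.
Proof. by apply: Fn_ext. Qed.

Section Cob.
Variable P : Mat -> Prop.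
Hypothesis P1 : P 1.
Hypothesis Pc : forall a b, P a -> P b -> a *m b = b *m a.

Lemma gatP n (g : 'I_n -> Mat) m : (forall k, P (g k)) -> P (gat g m).
Proof. by move=> H; rewrite /gat; case: insub => /=. Qed.

Lemma insP i x h : P x -> (forall k, P (h k)) -> forall k, P (ins i x h k).
Proof. by move=> Px Ph k; rewrite /ins; case: ifP => _ //; case: ifP. Qed.

Lemma E_cob n (f : cochain p n.+1) (b : cochain p n) xs :
  (forall i, P (xs i)) ->
  (forall h, (forall k, P (h k)) -> Fn f h = Fn (delta b) h) -> E xs f = 0.
Proof.
move=> Px; elim: n f b => [|n IH] f b Hf.
  rewrite /= /S big_nat1 /sg expr0 mul1r Hf; last first.
    by apply: insP => // k; apply: gatP => -[].
  rewrite delta_nat big_nat_recl // big_nat1 /sg expr0 mul1r expr1 mulN1r.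
  by apply/eqP; rewrite subr_eq0; apply/eqP; exact: Fn0.
rewrite /=; apply: (IH _ (fun g => - S (xs n.+1) b g)) => h Ph.
rewrite delta_neg -L3; last by move=> k; apply: Pc.
rewrite !S_nat; apply: eq_bigr => i _; congr (_ * _); apply: Hf.
exact: insP.
Qed.

End Cob.

Definition cup n (f : cochain p n) (psi : Mat -> F) : cochain p n.+1 :=
  fun g => Fn f (gat g) * psi (gat g n).

Lemma cup_nat n (f : cochain p n) psi h : Fn (cup f psi) h = Fn f h * psi (h n).
Proof.
rewrite {1}/Fn /cup gat_lt //; congr (_ * _).
by apply: Fn_ext => k lk; rewrite gat_lt //; lia.
Qed.

Lemma S_cup0 x (f : cochain p 0) psi h : Fn (S x (cup f psi)) h = Fn f h * psi x.
Proof.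
rewrite S_nat big_nat1 cup_nat /sg expr0 mul1r; congr (_ * _); first exact: Fn0.
Qed.

Lemma S_cupS n x (f : cochain p n.+1) psi h :
  Fn (S x (cup f psi)) h = Fn (S x f) h * psi (h n) + sg n.+1 * (Fn f h * psi x).
Proof.
rewrite S_nat big_nat_recr //= cup_nat; congr (_ + _).
  rewrite S_nat mulr_suml; apply: eq_big_nat => i /andP[_ lti].
  rewrite cup_nat mulrA; congr (_ * psi _); rewrite /ins; crush.
congr (_ * (_ * psi _)).
  by apply: Fn_ext => k lk; rewrite /ins; crush.
by rewrite /ins; crush.
Qed.

Lemma cup_cocycle (G : Mat -> Prop) n (f : cochain p n) psi :
  (forall h, (forall k, G (h k)) -> Fn (delta f) h = 0) ->
  (forall a b, G a -> G b -> psi (a *m b) = psi a + psi b) ->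
  forall h, (forall k, G (h k)) -> Fn (delta (cup f psi)) h = 0.
Proof.
move=> Hf Hpsi h Gh.
have := Hf h Gh; rewrite !delta_nat big_nat_recr //= => Hc.
rewrite big_nat_recr //= big_nat_recr //=.
have E1 : \sum_(0 <= i < n.+1) sg i * Fn (cup f psi) (D n.+2 i h)
   = (\sum_(0 <= i < n.+1) sg i * Fn f (D n.+1 i h)) * psi (h n.+1).
  rewrite mulr_suml; apply: eq_big_nat => i /andP[_ lti].
  rewrite cup_nat -mulrA; congr (_ * (_ * psi _)).
    by apply: Fn_ext => k lk; rewrite /D /dfirst /dmul; crush.
  by rewrite /D /dfirst /dmul; crush.
have E2 : Fn (cup f psi) (D n.+2 n.+1 h) = Fn f h * (psi (h n) + psi (h n.+1)).
  rewrite cup_nat; congr (_ * _).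
    by apply: Fn_ext => k lk; rewrite /D /dfirst /dmul; crush.
  rewrite /D /dfirst /dmul; crush; exact: Hpsi.
have E3 : Fn (cup f psi) (D n.+2 n.+2 h) = Fn f h * psi (h n).
  by rewrite /D /= eqxx cup_nat.
have E4 : Fn f (D n.+1 n.+1 h) = Fn f h by rewrite /D /= eqxx.
rewrite E1 E2 E3; rewrite E4 in Hc.
have -> : \sum_(0 <= i < n.+1) sg i * Fn f (D n.+1 i h) = - (sg n.+1 * Fn f h).
  by apply/eqP; rewrite -addr_eq0 Hc.
rewrite !sgS; ring.
Qed.

Fixpoint Z (psis : nat -> Mat -> F) (n : nat) : cochain p n :=
  match n return cochain p n with
  | 0 => fun _ => 1
  | n'.+1 => cup (@Z psis n') (psis n')
  end.

Lemma Z_S psis n : @Z psis n.+1 = cup (@Z psis n) (psis n).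
Proof. by []. Qed.

Lemma Z_cocycle (G : Mat -> Prop) psis n :
  (forall i a b, G a -> G b -> psis i (a *m b) = psis i a + psis i b) ->
  forall h, (forall k, G (h k)) -> Fn (delta (@Z psis n)) h = 0.
Proof.
move=> Hpsi; elim: n => [|n IH] h Gh.
  rewrite delta_nat big_nat_recl // big_nat1 /Fn /= /sg expr0 expr1. by rewrite !mulr1 subrr.
exact: (cup_cocycle IH (Hpsi n)).
Qed.

Lemma V1 psis x n h : (forall a, (a <= n)%N -> psis a x = 0) ->
  Fn (S x (@Z psis n.+1)) h = 0.
Proof.
elim: n h => [|n IH] h H.
  by rewrite /= S_cup0 H // mulr0.
by rewrite /= S_cupS -/(@Z psis n.+1) IH ?H // ?mul0r ?mulr0 ?addr0 // => a la; apply: H; lia.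
Qed.

Lemma V2 psis x n h : (forall a, (a < n)%N -> psis a x = 0) ->
  Fn (S x (@Z psis n.+1)) h = sg n * psis n x * Fn (@Z psis n) h.
Proof.
case: n => [|n] H.
  by rewrite /= S_cup0 /sg expr0 mul1r /Fn /= mulr1.
rewrite Z_S S_cupS V1 ?mul0r ?add0r; last by move=> a la; apply: H; lia.
by rewrite [Fn _ _ * _]mulrC mulrA.
Qed.

Lemma E_S n xs (f : cochain p n.+1) : E xs f = E xs (S (xs n) f).
Proof. by []. Qed.

Lemma V3 psis (xs : nat -> Mat) n :
  (forall a b, (a < b)%N -> (b < n)%N -> psis a (xs b) = 0) ->
  E xs (@Z psis n) = \prod_(i < n) (sg i * psis i (xs i)).
Proof.
elim: n => [|n IH] H; first by rewrite big_ord0.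
rewrite big_ord_recr E_S.
have -> : S (xs n) (@Z psis n.+1) = fun g => (sg n * psis n (xs n)) * @Z psis n g.
  apply: functional_extensionality => g.
  have e1 := Fn_gat (S (xs n) (@Z psis n.+1)) g.
  have e2 := Fn_gat (@Z psis n) g.
  rewrite -e1 -e2; apply: V2 => a la; exact: H.
rewrite E_scale IH; first by rewrite mulrC.
move=> a b ab bn; apply: H => //; lia.
Qed.

End Comb.

Section Grp.
Variables (p r : nat).
Hypothesis pp : prime p.
Hypothesis r1 : (0 < r)%N.
Local Notation q := ((p ^ r)%N%:R : {poly int}).

Definition i1 : 'I_2 := ord_max.
Definition umat (s : {poly int}) : Mat := 1 + q *: (s *: delta_mx ord0 i1).

Ltac ord2 i := case: i => [[|[|?]] ?] //.

Lemma umatM s s' : umat s *m umat s' = umat (s + s').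
Proof.
apply/matrixP => i j; rewrite !mxE !big_ord_recl big_ord0 !mxE.
ord2 i; ord2 j; rewrite /= ?mxE /=; ring.
Qed.

Lemma umat0 : umat 0 = 1.
Proof. by rewrite /umat scale0r scaler0 addr0. Qed.

Lemma umat_det s : \det (umat s) = 1.
Proof.
rewrite -det_tr det_trig; last first.
  apply/is_trig_mxP => i j; rewrite !mxE.
  ord2 i; ord2 j; rewrite /= ?mxE //= => _; ring.
rewrite big_ord_recl big_ord1 /umat !mxE /=; ring.
Qed.

Lemma umat_Gamma s : inGamma p r (umat s).
Proof. split; first exact: umat_det. by exists (s *: delta_mx ord0 i1). Qed.

Definition phi (a : nat) (M : Mat) : 'F_p :=
  ((((M ord0 i1)`_a) %/ ((p ^ r)%N%:R : int))%Z)%:~R.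

Lemma q_neq0 : ((p ^ r)%N%:R : int) != 0.
Proof. rewrite pnatr_eq0 -lt0n expn_gt0 prime_gt0 //. Qed.

Lemma phiE a (M : Mat) P : M ord0 i1 = q * P -> phi a M = (P`_a)%:~R.
Proof.
move=> H; rewrite /phi H mulr_natl coefMn -[_ *+ (p ^ r)%N]mulr_natr mulzK //; exact: q_neq0.
Qed.

Lemma phi_umat a s : phi a (umat s) = (s`_a)%:~R.
Proof.
apply: phiE; rewrite !mxE /=; ring.
Qed.

Lemma qF : ((p ^ r)%N%:R : 'F_p) = 0.
Proof. by rewrite natrX pchar_Fp_0 // expr0n; case: r r1. Qed.

Lemma phi_hom a (M M' : Mat) : inGamma p r M -> inGamma p r M' ->
  phi a (M *m M') = phi a M + phi a M'.
Proof.
move=> [_ [N HN]] [_ [N' HN']].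
have e1 : M ord0 i1 = q * N ord0 i1 by rewrite HN !mxE /=; ring.
have e2 : M' ord0 i1 = q * N' ord0 i1 by rewrite HN' !mxE /=; ring.
rewrite (phiE a e1) (phiE a e2).
have e3 : (M *m M') ord0 i1 = q * (N ord0 i1 + N' ord0 i1 +
   q * (N ord0 ord0 * N' ord0 i1 + N ord0 i1 * N' i1 i1)).
  have li : lift ord0 ord0 = i1 :> 'I_2 by apply: val_inj.
  rewrite HN HN' !mxE !big_ord_recl big_ord0 !mxE /= li; ring.
rewrite (phiE a e3) !coefD mulr_natl coefMn !intrD.
have -> : ((_ *+ (p ^ r)%N)%:~R : 'F_p) = 0.
  move=> s; rewrite -mulr_natr intrM.
  have -> : (((p ^ r)%N%:R : int)%:~R : 'F_p) = (p ^ r)%N%:R by rewrite natz.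
  by rewrite qF mulr0.
by rewrite addr0.
Qed.

Definition inU (M : Mat) := exists s, M = umat s.

Lemma inU1 : inU 1.
Proof. by exists 0; rewrite umat0. Qed.

Lemma inU_com a b : inU a -> inU b -> a *m b = b *m a.
Proof. by move=> [s ->] [t ->]; rewrite !umatM addrC. Qed.

Lemma inU_G a : inU a -> inGamma p r a.
Proof. by move=> [s ->]; exact: umat_Gamma. Qed.

Definition w (k a : nat) : nat := if a == 0%N then (2 * k)%N else (2 * a).+1.
Definition psis (k : nat) : nat -> Mat -> 'F_p := fun a => phi (w k a).
Definition xs (l : nat) : nat -> Mat := fun b => umat ('X^(w l b)).

Lemma phi_xs k l a b : phi (w k a) (xs l b) = (w k a == w l b)%:R.
Proof. by rewrite /xs phi_umat coefXn natz. Qed.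

Lemma main j : (0 < j)%N -> ~ cohom_fin_gen p r j.
Proof.
case: j => [//|j] _ [m [c [_ Hspan]]].
pose z (k : nat) : cochain p j.+1 := @Z p (psis k) j.+1.
have G1 : inGamma p r 1 by rewrite -umat0; exact: umat_Gamma.
have cocz : forall k, is_cocycle r (z k).
  move=> k g Hg; rewrite -Fn_gat.
  apply: (@Z_cocycle p (inGamma p r)).
    by move=> i a b Ga Gb; apply: phi_hom.
  by move=> t; apply: (@gatP (inGamma p r) G1).
pose a (k : 'I_m.+1) := proj1_sig (constructive_indefinite_description _ (Hspan _ (cocz k))).
have Ha : forall (k l : 'I_m.+1), E (xs l) (z k) = \sum_(i < m) a k i * E (xs l) (c i).
  move=> k l.
  have := proj2_sig (constructive_indefinite_description _ (Hspan _ (cocz k))).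
  rewrite -/(a k) => -[b Hb].
  have := @E_cob p inU inU1 inU_com j
     (fun g => z k g - \sum_(i < m) a k i * c i g) b (xs l).
  have -> : (fun g => z k g - \sum_(i < m) a k i * c i g) =
            (fun g => 1 * z k g + \sum_(i < m) (- a k i) * c i g).
    apply: functional_extensionality => g.
    by rewrite mul1r -sumrN; congr (_ + _); apply: eq_bigr => i _; rewrite mulNr.
  rewrite E_lin mul1r => H.
  apply/eqP; rewrite -subr_eq0 -sumrN.
  under eq_bigr => i _ do rewrite -mulNr.
  apply/eqP; apply: H.
    by move=> i; rewrite /xs; eexists.
  move=> h Ph; rewrite /Fn -Hb ?mul1r -?sumrN.
    by congr (_ + _); apply: eq_bigr => i _; rewrite mulNr.
  by move=> t; apply: inU_G.
pose s := \prod_(i < j.+1) @sg p i.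
have Hz : forall k l : 'I_m.+1, E (xs l) (z k) = s * (k == l)%:R.
  move=> k l; rewrite /z V3; last first.
    move=> a0 b0 ab _; rewrite /psis phi_xs.
    have -> : (w k a0 == w l b0) = false; last by [].
    rewrite /w; have -> : (b0 == 0%N) = false by apply/eqP; lia.
    case: ifP => _; apply/eqP; lia.
  rewrite big_split /=; congr (_ * _).
  rewrite big_ord_recl big1 ?mulr1.
    by rewrite /psis phi_xs /w /= eqn_pmul2l.
  by move=> i _; rewrite /psis phi_xs /w /= eqxx.
have Hs : s != 0 by apply/prodf_neq0 => i _; rewrite /sg signr_eq0.
pose A := \matrix_(k < m.+1, i < m) a k i.
pose B := \matrix_(i < m, l < m.+1) E (xs l) (c i).
have AB : A *m B = s%:M.
  apply/matrixP => k l; rewrite !mxE -mulr_natr -Hz Ha.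
  by apply: eq_bigr => i _; rewrite !mxE.
have := mxrankM_maxl A B; rewrite AB mxrank_unit; last first.
  by rewrite unitmxE det_scalar unitfE expf_neq0.
have := rank_leq_col A; lia.
Qed.

End Grp.

Theorem theorem5p1 (p r j : nat) :
  prime p -> (1 <= r)%N -> (1 <= j)%N -> ~ cohom_fin_gen p r j.
Proof. move=> pp r1 j1; exact: main. Qed.
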